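(* Let $|V|,S,p,d,d_w$ be positive integers. Let $C\in\mathbb{R}^{(|V|+1)\times p}$ be a token-embedding matrix whose $i$-th row is $c_i^\top$, where index $|V|+1$ is the \texttt{[MASK]} token, and let $P\in\mathbb{R}^{S\times p}$ be a positional-encoding matrix. Let $W^V\in\mathbb{R}^{d\times p}$, $W^Q,W^K\in\mathbb{R}^{d_w\times p}$, $W^O\in\mathbb{R}^{d\times p}$, $W'\in\mathbb{R}^{p\times p}$, $W''\in\mathbb{R}^{|V|\times p}$. For a masked sentence given by a matrix $\overline{X}\in\{0,1\}^{S\times(|V|+1)}$ whose rows are one-hot vectors, with masked position $m\in[S]$ (so the $m$-th row of $\overline{X}$ is the one-hot vector of index $|V|+1$) and masked (target) token $b\in[|V|]$, define the single-head single-layer attention model: $X'=\overline{X}C+P$; $X^{\mathrm{attn}}=\mathrm{softmax}\big(X'(W^Q)^\top W^K(X')^\top/\sqrt{d_w}\big)X'(W^V)^\top$ (softmax taken row-wise); $Z=X^{\mathrm{attn}}W^O$; $Z'=X'+Z$; $Z''=Z'+Z'(W')^\top$ (i.e. each row $Z'_i$ is mapped to $Z'_i+W'Z'_i$); and $\hat y=\mathrm{softmax}(W''Z''_m)\in\mathbb{R}^{|V|}$, where $Z''_m$ is the $m$-th row of $Z''$ viewed as a column vector. Let $L_{\mathrm{MLM}}(m,b)=-\log \hat y_b$ be the masked-language-modeling (cross-entropy) loss. Then there exist $g\in\mathbb{R}^{|V|}$, $D\in\mathbb{R}^{|V|\times S}$, $W^{LOV}\in\mathbb{R}^{|V|\times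 p}$ and $W^{KQ}\in\mathbb{R}^{p\times p}$, determined by the parameters $C,P,W^V,W^Q,W^K,W^O,W',W''$ alone (not depending on $\overline{X}$, $m$ or $b$), such that for every such $\overline{X},m,b$, \[ L_{\mathrm{MLM}}(m,b) = - \frac{\sum_{j=1}^S\theta(j,m)\chi(j,m,b) }{\sum_{j=1}^S \theta(j,m)} +\log\left( \sum_{k=1}^{|V|} \exp\left( \frac{\sum_{j=1}^S\theta(j,m)\chi(j,m,k) }{\sum_{j=1}^S \theta(j,m)} \right)\right), \] where \[ \theta(j,m) = \exp\left(\frac{ e_j^\top (\overline{X} C+P) W^{KQ} (c_{|V|+1} + P^\top e_m)}{\sqrt{d_w}} \right),\qquad \chi(j,m,k) = \left( W^{LOV} (\overline{X} C+P)^\top e_j + g + D e_m \right)_k, \] and $e_j\in\{0,1\}^S$ denotes the $j$-th standard basis vector.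
   Context: $\mathrm{softmax}$ of a vector $v$ is the vector with entries $e^{v_k}/\sum_l e^{v_l}$; $(v)_k$ denotes the $k$-th entry of a vector $v$; $[n]=\{1,\dots,n\}$. *)

(* Defs.v *)
From mathcomp Require Import all_boot all_order all_algebra.
From mathcomp Require Import all_classical all_reals.
From mathcomp Require Import sequences exp.
Set Implicit Arguments. Unset Strict Implicit. Unset Printing Implicit Defensive.
Import Order.TTheory GRing.Theory Num.Theory.
Local Open Scope ring_scope.

Section Model.
Variable R : realType.

Definition rsoftmax (m n : nat) (A : 'M[R]_(m, n)) : 'M[R]_(m, n) :=
  \matrix_(i, j) (expR (A i j) / \sum_(l < n) expR (A i l)).

Definition csoftmax (n : nat) (v : 'cV[R]_n) : 'cV[R]_n :=
  \col_i (expR (v i 0) / \sum_(l < n) expR (v l 0)).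

Variables (nV S p d dw : nat).

Definition Xprime (C : 'M[R]_(nV.+1, p)) (P : 'M[R]_(S, p))
  (Xbar : 'M[R]_(S, nV.+1)) : 'M[R]_(S, p) := Xbar *m C + P.

Definition yhat (C : 'M[R]_(nV.+1, p)) (P : 'M[R]_(S, p))
  (WV : 'M[R]_(d, p)) (WQ WK : 'M[R]_(dw, p)) (WO : 'M[R]_(d, p))
  (W1 : 'M[R]_(p, p)) (W2 : 'M[R]_(nV, p))
  (Xbar : 'M[R]_(S, nV.+1)) (m : 'I_S) : 'cV[R]_nV :=
  let X' := Xprime C P Xbar in
  let Xattn := rsoftmax ((Num.sqrt (dw%:R))^-1 *: (X' *m WQ^T *m WK *m X'^T))
                 *m X' *m WV^T in
  let Z := Xattn *m WO in
  let Z' := X' + Z in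
  let Z'' := Z' + Z' *m W1^T in
  csoftmax (W2 *m (row m Z'')^T).

Definition loss_MLM C P WV WQ WK WO W1 W2 Xbar (m : 'I_S) (b : 'I_nV) : R :=
  - ln (yhat C P WV WQ WK WO W1 W2 Xbar m b 0).

End Model.

(* Main.v *)
Require Import Defs.
From mathcomp Require Import all_boot all_order all_algebra.
From mathcomp Require Import all_classical all_reals.
From mathcomp Require Import sequences exp.
Import Order.TTheory GRing.Theory Num.Theory.
Local Open Scope ring_scope.

Lemma entry_mul (R : pzSemiRingType) m n k (A : 'M[R]_(m, n)) (B : 'M[R]_(n, k)) i j :
  (A *m B) i j = (row i A *m col j B) 0 0.
Proof. by rewrite !mxE; apply: eq_bigr => l _; rewrite !mxE. Qed.

Lemma scal_tr (R : comPzRingType) n k (u : 'rV[R]_n) (N : 'M[R]_(n, k)) (v : 'rV[R]_k) :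
  (u *m N *m v^T) 0 0 = (v *m N^T *m u^T) 0 0.
Proof.
have tr1 : forall M : 'M[R]_1, M 0 0 = M^T 0 0 by move=> M; rewrite mxE.
by rewrite tr1 !trmx_mul trmxK mulmxA.
Qed.

Lemma sum_pos (R : numDomainType) n (F : 'I_n -> R) :
  (0 < n)%N -> (forall i, 0 < F i) -> 0 < \sum_(i < n) F i.
Proof.
case: n F => [//|n] F _ HF; rewrite big_ord_recl.
apply: (lt_le_trans (HF ord0)); rewrite lerDl; apply: sumr_ge0 => i _.
exact: ltW (HF _).
Qed.

Theorem lemma1 (R : realType) (nV S p d dw : nat)
  (hV : (0 < nV)%N) (hS : (0 < S)%N) (hp : (0 < p)%N) (hd : (0 < d)%N)
  (hdw : (0 < dw)%N)
  (C : 'M[R]_(nV.+1, p)) (P : 'M[R]_(S, p))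
  (WV : 'M[R]_(d, p)) (WQ WK : 'M[R]_(dw, p)) (WO : 'M[R]_(d, p))
  (W1 : 'M[R]_(p, p)) (W2 : 'M[R]_(nV, p)) :
  exists (g : 'cV[R]_nV) (D : 'M[R]_(nV, S)) (WLOV : 'M[R]_(nV, p))
         (WKQ : 'M[R]_(p, p)),
  forall (Xbar : 'M[R]_(S, nV.+1)) (m : 'I_S) (b : 'I_nV),
    (forall i : 'I_S, exists k : 'I_nV.+1,
        forall j : 'I_nV.+1, Xbar i j = (j == k)%:R) ->
    (forall j : 'I_nV.+1, Xbar m j = (j == ord_max)%:R) ->
    let X' := Xbar *m C + P in
    let e := fun j : 'I_S => (delta_mx j 0 : 'cV[R]_S) in
    let theta := fun j : 'I_S =>
      expR (((e j)^T *m X' *m WKQ *m ((row ord_max C)^T + P^T *m e m)) 0 0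
            / Num.sqrt (dw%:R)) in
    let chi := fun (j : 'I_S) (k : 'I_nV) =>
      (WLOV *m X'^T *m e j + g + D *m e m) k 0 in
    loss_MLM C P WV WQ WK WO W1 W2 Xbar m b =
      - ((\sum_(j < S) theta j * chi j b) / \sum_(j < S) theta j)
      + ln (\sum_(k < nV) expR ((\sum_(j < S) theta j * chi j k)
                                / \sum_(j < S) theta j)).
Proof.
pose Q := W2 *m (1%:M + W1^T)^T.
exists (Q *m (row ord_max C)^T), (Q *m P^T), (Q *m WO^T *m WV), (WK^T *m WQ).
move=> Xbar m b _ Hm X' e theta chi.
have Xm : row m X' = row ord_max C + row m P.
  rewrite /X' linearD /= row_mul.
  have -> : row m Xbar = row ord_max (1%:M : 'M[R]_nV.+1).
    by apply/rowP => j; rewrite !mxE Hm eq_sym.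
  by rewrite -row_mul mul1mx.
have Em : (row ord_max C)^T + P^T *m e m = (row m X')^T.
  rewrite Xm linearD /= /e -colE. idtac.
  by congr (_ + _); apply/matrixP => i j; rewrite !mxE.
have Th : forall j, theta j = expR (((Num.sqrt dw%:R)^-1 *: (X' *m WQ^T *m WK *m X'^T)) m j).
  move=> j; rewrite /theta Em [in RHS]mxE.
  have -> : ((e j)^T *m X' *m (WK^T *m WQ) *m (row m X')^T) 0 0
      = (row j X' *m (WK^T *m WQ) *m (row m X')^T) 0 0 by rewrite /e trmx_delta -rowE.
  have -> : (X' *m WQ^T *m WK *m X'^T) m j
      = (row m X' *m (WQ^T *m WK) *m (row j X')^T) 0 0.
    by rewrite entry_mul !row_mul -tr_row !mulmxA.
  by rewrite scal_tr trmx_mul trmxK mulrC.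
rewrite /loss_MLM /yhat /csoftmax /= mxE.
rewrite (_ : Xprime C P Xbar = X') //.
set A := (_ *: (X' *m _ *m _ *m _)).
set Z' := X' + _.
set L := W2 *m _.
have sth : 0 < \sum_(j < S) theta j.
  by apply: sum_pos => // j; exact: expR_gt0.
have sE : forall j, rsoftmax A m j = theta j / \sum_(j < S) theta j.
  by move=> j; rewrite mxE Th; congr (_ / _); apply: eq_bigr => l _; rewrite Th.
have HL : forall k, L k 0 = (\sum_(j < S) theta j * chi j k) / \sum_(j < S) theta j.
  move=> k.
  pose u j := (Q *m WO^T *m WV *m (row j X')^T) k 0.
  pose c := (Q *m (row m X')^T) k 0.
  have chiE : forall j, chi j k = u j + c.
    move=> j; rewrite /chi -addrA -[Q *m P^T *m e m]mulmxA -mulmxDr Em -[_ *m X'^T *m e j]mulmxA /e -colE -tr_row mxE.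
    by [].  
  have LE : L = Q *m (row m X')^T + Q *m WO^T *m WV *m (row m (rsoftmax A) *m X')^T.
    rewrite /L /Q linearD /= row_mul -{1}(mulmx1 (row m Z')) -mulmxDr trmx_mul mulmxA.
    rewrite /Z' [row m _]linearD /= !row_mul [(row m X' + _)^T]linearD /= mulmxDr.
    by rewrite !trmx_mul !mulmxA trmxK.
  have RS : (row m (rsoftmax A) *m X')^T
      = \sum_(j < S) (theta j / \sum_(j < S) theta j) *: (row j X')^T.
    apply/matrixP => i j0; rewrite mxE summxE !mxE; apply: eq_bigr => l _.
    by rewrite -sE !mxE.
  rewrite LE RS mulmx_sumr mxE summxE.
  under eq_bigr => j _ do rewrite -scalemxAr mxE.
  under [in RHS]eq_bigr => j _ do rewrite chiE mulrDr.
  rewrite big_split /=.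
  have -> : \sum_(j < S) theta j * c = (\sum_(j < S) theta j) * c by rewrite mulr_suml.
  rewrite mulrDl [_ * c / _]mulrAC divff ?mul1r ?gt_eqF // addrC mulr_suml.
  congr (_ + _); apply: eq_bigr => j _; rewrite /u mulrAC //.
rewrite -HL [in RHS](eq_bigr (fun k => expR (L k 0))); last by move=> k _; rewrite HL.
have sp : 0 < \sum_(l < nV) expR (L l 0) by apply: sum_pos => // l; exact: expR_gt0.
rewrite lnM ?posrE ?invr_gt0 ?expR_gt0 // lnV ?posrE // expRK opprD opprK.
congr (_ + ln _); apply: eq_bigr => k _; congr (expR (L k _)); exact: val_inj.
Qed.
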